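(* Let $n\ge 5$. Then no subset $R\subseteq V_2$ of size $n-2$ such that any two distinct vertices of $R$ are at distance $2$ in $H(n)$ is a doubly resolving set of $H(n)$.
   Context: For $n\ge 5$, $H(n)$ is the graph with vertex set $V_1\cup V_2$, where $V_1=\{v_1,\dots,v_n\}$ and $V_2=\{v_iv_j: 1\le i<j\le n\}$ (each $v_iv_j$ a single vertex), and where $v_r\in V_1$ is adjacent to $v_iv_j\in V_2$ iff $r=i$ or $r=j$; there are no other edges. $d(u,v)$ is the shortest-path distance. For an ordered set $Q=\{q_1,\dots,q_l\}$ of vertices, $r(x|Q)=(d(x,q_1),\dots,d(x,q_l))$. $Q$ is a doubly resolving set of a graph $G$ if for any two distinct vertices $x,y$ of $G$, $r(x|Q)-r(y|Q)\neq\lambda(1,\dots,1)$ for every integer $\lambda$. *)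

(* Defs.v *)
From HB Require Import structures.
From mathcomp Require Import all_boot all_order all_algebra.
Set Implicit Arguments. Unset Strict Implicit. Unset Printing Implicit Defensive.

Section Dist.
Variables (T : finType) (e : rel T).

Fixpoint ball (k : nat) (x : T) : {set T} :=
  match k with
  | 0 => [set x]
  | k'.+1 => ball k' x :|: [set y | [exists z in ball k' x, e z y]]
  end.

(* shortest-path distance: least k with y in ball k x
   (equals #|T| if y is unreachable; H(n) is connected, so this never occurs) *)
Definition gdist (x y : T) : nat := find (fun k => y \in ball k x) (iota 0 #|T|).
End Dist.

(* V2 vertices: pairs (i, j) with i < j, standing for v_i v_j *)
Definition pairT (n : nat) := {p : 'I_n * 'I_n | p.1 < p.2}.

(* vertices: inl r = v_r in V1, inr p = v_i v_j in V2 *)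
Definition Hvert (n : nat) : finType := ('I_n + pairT n)%type.

Definition Hadj (n : nat) : rel (Hvert n) := fun x y =>
  match x, y with
  | inl r, inr p => (r == (val p).1) || (r == (val p).2)
  | inr p, inl r => (r == (val p).1) || (r == (val p).2)
  | _, _ => false
  end.

Definition Hdist (n : nat) (x y : Hvert n) : nat := gdist (@Hadj n) x y.

Definition inV2 (n : nat) (x : Hvert n) : bool := if x is inr _ then true else false.

Definition doubly_resolving (n : nat) (Q : {set Hvert n}) : Prop :=
  forall x y : Hvert n, x <> y ->
    ~ (exists lambda : int,
         forall q, q \in Q -> ((Hdist x q)%:Z - (Hdist y q)%:Z)%R = lambda).

(* Main.v *)
Require Import Defs.
From mathcomp Require Import all_boot all_order all_algebra zify.
Set Implicit Arguments. Unset Strict Implicit. Unset Printing Implicit Defensive.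

Lemma find_le m N : m < N -> find (fun k => m <= k) (iota 0 N) = m.
Proof.
move=> hm; rewrite -(subnKC (ltnW hm)) iotaD find_cat.
rewrite (_ : has _ (iota 0 m) = false); last first.
  apply/hasP => [[k]]; rewrite mem_iota add0n => hk hk2; lia.
rewrite size_iota add0n; case: (N - m) => [|j] /=; first lia.
by rewrite leqnn addn0.
Qed.

Section G.
Variable n : nat.
Definition f1 (p : pairT n) : nat := nat_of_ord (sval p).1.
Definition f2 (p : pairT n) : nat := nat_of_ord (sval p).2.
Lemma f12 p : f1 p < f2 p. Proof. exact: (svalP p). Qed.
Lemma f2n p : f2 p < n. Proof. exact: ltn_ord. Qed.

Definition D (x y : Hvert n) : nat :=
 match x, y with
 | inl r, inl s => if nat_of_ord r == nat_of_ord s then 0 else 2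
 | inl r, inr p => if (nat_of_ord r == f1 p) || (nat_of_ord r == f2 p) then 1 else 3
 | inr p, inl r => if (nat_of_ord r == f1 p) || (nat_of_ord r == f2 p) then 1 else 3
 | inr p, inr q => if (f1 p == f1 q) && (f2 p == f2 q) then 0
     else if [|| f1 p == f1 q, f1 p == f2 q, f2 p == f1 q | f2 p == f2 q] then 2 else 4
 end.

Lemma adjE (x y : Hvert n) : Hadj x y =
 match x, y with
 | inl r, inr p => (nat_of_ord r == f1 p) || (nat_of_ord r == f2 p)
 | inr p, inl r => (nat_of_ord r == f1 p) || (nat_of_ord r == f2 p)
 | _, _ => false end.
Proof. by case: x; case: y. Qed.

Lemma pair_inj (p q : pairT n) : f1 p = f1 q -> f2 p = f2 q -> p = q.
Proof.
case: p => [[a b] Hp]; case: q => [[c d] Hq]; rewrite /f1 /f2 /= => h1 h2.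
apply: val_inj => /=. by rewrite (val_inj h1) (val_inj h2).
Qed.

Lemma mkpair (r s : 'I_n) : nat_of_ord r != nat_of_ord s -> exists p : pairT n,
  ((f1 p == nat_of_ord r) && (f2 p == nat_of_ord s)) || ((f1 p == nat_of_ord s) && (f2 p == nat_of_ord r)).
Proof.
move=> h; case: (ltngtP r s) => H.
- by exists (exist _ (r, s) H); rewrite /f1 /f2 /= !eqxx.
- by exists (exist _ (s, r) H); rewrite /f1 /f2 /= !eqxx orbT.
- by move/eqP: h; case.
Qed.

Lemma mkpair1 (p : pairT n) (s : 'I_n) : f1 p != nat_of_ord s -> exists P : pairT n,
  ((f1 P == f1 p) && (f2 P == nat_of_ord s)) || ((f1 P == nat_of_ord s) && (f2 P == f1 p)).
Proof. exact: mkpair. Qed.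

Lemma D0 x y : D x y = 0 -> x = y.
Proof.
case: x => [r|p]; case: y => [s|q] //=.
- by case: ifP => // /eqP h _; rewrite (val_inj h).
- by case: ifP.
- by case: ifP.
- case: ifP => [/andP [/eqP h1 /eqP h2] _|]; first by rewrite (pair_inj h1 h2).
  by case: ifP.
Qed.

Lemma Dxx x : D x x = 0.
Proof. by case: x => [r|p] /=; rewrite !eqxx. Qed.

Lemma Dle4 x y : D x y <= 4.
Proof. case: x => [r|p]; case: y => [s|q] /=; repeat case: ifP => //. Qed.

Lemma Dtri x z y : Hadj z y -> D x y <= D x z + 1.
Proof.
rewrite adjE.
have := f12; have := f2n.
case: x => [r|p]; case: z => [s|q]; case: y => [t|u] //= H1 H2.
- move: (H1 u) (H2 u) => ? ?; repeat case: ifP; lia.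
- move: (H1 q) (H2 q) => ? ?; repeat case: ifP; lia.
- move: (H1 u) (H2 u) (H1 p) (H2 p) => ? ? ? ?; repeat case: ifP; lia.
- move: (H1 q) (H2 q) (H1 p) (H2 p) => ? ? ? ?; repeat case: ifP; lia.
Qed.

Lemma Dstep x y : 0 < D x y -> exists z, D x z = (D x y).-1 /\ Hadj z y.
Proof.
have F12 := f12; have F2n := f2n.
case: x => [r|p]; case: y => [s|q] /=.
- case: ifP => // hrs _.
  have [P hP] := mkpair (negbT hrs).
  exists (inr P); rewrite adjE /=. move: (F12 P) => ?. split; [case: ifP => //; lia | lia].
- case: ifP => hr _.
  + exists (inl r); rewrite adjE /= eqxx; split => //.
  + exists (inl (sval q).1); rewrite adjE /=; rewrite /f1 /=.
    split; last by rewrite eqxx.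
    case: ifP => //; move: hr; rewrite /f1; lia.
- case: ifP => hr _.
  + exists (inr p); split; [by rewrite /= !eqxx | by rewrite adjE].
  + have hne : f1 p != nat_of_ord s by move: hr; lia.
    have [P hP] := mkpair1 hne.
    exists (inr P); rewrite adjE /=. move: (F12 P) (F12 p) => ? ?.
    split; last by move: hP; rewrite /f1; lia.
    move: hP hr; rewrite /f1; repeat case: ifP; lia.
- case: ifP => [_ //|hpq]. case: ifP => hm _.
  + have [c [hc1 hc2]] : exists c : 'I_n, (nat_of_ord c == f1 p) || (nat_of_ord c == f2 p) /\
       ((nat_of_ord c == f1 q) || (nat_of_ord c == f2 q)).
      case: (boolP ((f1 p == f1 q) || (f1 p == f2 q))) => h.
      * exists (sval p).1.
        change (((f1 p == f1 p) || (f1 p == f2 p)) /\ ((f1 p == f1 q) || (f1 p == f2 q))).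
        by rewrite eqxx h.
      * exists (sval p).2.
        change (((f2 p == f1 p) || (f2 p == f2 p)) /\ ((f2 p == f1 q) || (f2 p == f2 q))).
        rewrite eqxx orbT; split => //; move: h hm; lia.
    exists (inl c); rewrite adjE /= hc1 hc2; split => //.
  + exists (inl (sval q).1); rewrite adjE /=; rewrite /f1 /=.
    split; last by rewrite eqxx.
    move: hm (F12 p) (F12 q); rewrite /f1 /f2; case: ifP => //; lia.
Qed.

Lemma ballE k x : ball (@Hadj n) k x = [set y | D x y <= k].
Proof.
elim: k => [|k IH] /=.
  apply/setP => y; rewrite !inE leqn0; apply/eqP/eqP => [->|/D0 //]; exact: Dxx.
apply/setP => y; rewrite !inE IH inE; apply/orP/idP.
- case => [h|/existsP [z /andP [hz hzy]]]; first exact: leqW.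
  rewrite inE in hz. have := Dtri x hzy. lia.
- move=> h; case: (leqP (D x y) k) => h2; first by left.
  right; have [z [hz hzy]] := Dstep (x := x) (y := y) (leq_ltn_trans (leq0n k) h2).
  apply/existsP; exists z; rewrite inE hz hzy andbT; lia.
Qed.

Lemma HdistE x y : 5 <= n -> Hdist x y = D x y.
Proof.
move=> hn; rewrite /Hdist /gdist.
rewrite (eq_find (a2 := fun k => D x y <= k)); last by move=> k; rewrite ballE inE.
apply: find_le; rewrite card_sum card_ord; have := Dle4 x y; lia.
Qed.
End G.

Lemma ordeq n (x y : 'I_n) : (x == y) = (nat_of_ord x == nat_of_ord y).
Proof. by []. Qed.

Lemma star n (hn : 5 <= n) (R : {set Hvert n}) (hR : forall x, x \in R -> inV2 x)
  (hc : #|R| = n - 2) (c : 'I_n)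
  (hcR : forall p, inr p \in R -> (nat_of_ord c == f1 p) || (nat_of_ord c == f2 p)) :
  ~ doubly_resolving R.
Proof.
move=> hdr.
pose g (x : Hvert n) : 'I_n :=
  if x is inr p then (if nat_of_ord c == f1 p then (sval p).2 else (sval p).1) else c.
pose A := c |: (g @: R).
have hA : #|A| <= n - 1.
  rewrite cardsU1; have := leq_imset_card g R; rewrite hc; case: (c \notin _) => /=; lia.
have : 0 < #|~: A|.
  have := cardsCs A; rewrite card_ord; lia.
case/card_gt0P => k; rewrite !inE negb_or => /andP [hkc hkg].
have hck : nat_of_ord c != nat_of_ord k by rewrite eq_sym -ordeq.
have [P hP] := mkpair hck.
apply: (hdr (inl c) (inr P)) => //.
exists (-1)%R => q hq; rewrite !HdistE //.
case: q hq => [r|p] hq; first by have := hR _ hq.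
have hgk : g (inr p) != k by apply: contraNneq hkg => <-; apply: imset_f.
have hcp := hcR p hq.
have hg : ((nat_of_ord c == f1 p) && (nat_of_ord k != f2 p)) ||
          ((nat_of_ord c != f1 p) && (nat_of_ord k != f1 p)).
  move: hgk; rewrite /g; case: ifP => h hgk.
  - have h' : f2 p != nat_of_ord k := hgk. move: h h'; lia.
  - have h' : f1 p != nat_of_ord k := hgk. move: h h'; lia.
have := f12 p; have := f12 P; move: hP hcp hg => /=.
repeat case: ifP => ?; try (lia); done.
Qed.

Lemma tri n (hn : 5 <= n) (R : {set Hvert n}) (a b c : 'I_n)
  (hR : forall x, x \in R -> inV2 x)
  (h : forall p, inr p \in R ->
     [|| f1 p == nat_of_ord a, f1 p == nat_of_ord b | f1 p == nat_of_ord c] &&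
     [|| f2 p == nat_of_ord a, f2 p == nat_of_ord b | f2 p == nat_of_ord c]) :
  ~ doubly_resolving R.
Proof.
move=> hdr.
pose A := [set a; b; c].
have hA : #|A| <= 3.
  rewrite /A cardsU cardsU1 !cards1; case: (_ \notin _) => /=; lia.
have : 1 < #|~: A|.
  have := cardsCs A; rewrite card_ord; lia.
case/card_gt1P => d [e [hd he hde]].
move: hd he; rewrite !inE !ordeq => hd he.
apply: (hdr (inl d) (inl e)); first by move=> [] h'; move: hde; rewrite h' eqxx.
exists 0%R => q hq; rewrite !HdistE //.
case: q hq => [r|p] hq; first by have := hR _ hq.
have := h p hq; move: hd he => /=.
repeat case: ifP => ?; try (lia); done.
Qed.

Definition meets (x y u v : nat) := [|| x == u, x == v, y == u | y == v].

Lemma L3 (a b c x2 y2 x3 y3 : nat) :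
  ((x2 == b) && (y2 == c)) || ((x2 == c) && (y2 == b)) -> c != a -> c != b ->
  ~~ ((b == x3) || (b == y3)) -> meets x3 y3 a b -> meets x2 y2 x3 y3 ->
  ((x3 == a) || (y3 == a)) && ((x3 == c) || (y3 == c)).
Proof.
rewrite /meets => /orP [] /andP [/eqP -> /eqP ->] h1 h2 h3 h4 h5; clear x2 y2; lia.
Qed.

Lemma L4 (a b c x y u v : nat) : ((x == a) || (y == a)) && ((x == c) || (y == c)) -> c != a ->
  meets u v x y -> [|| u == a, u == c, v == a | v == c].
Proof. rewrite /meets => /andP [] /orP [] /eqP -> /orP [] /eqP -> ? ?; lia. Qed.

Lemma Lfin (a b c u w : nat) : a < b -> c != a -> c != b ->
  meets u w a b -> [|| u == b, u == c, w == b | w == c] -> [|| u == a, u == c, w == a | w == c] ->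
  [|| u == a, u == b | u == c] && [|| w == a, w == b | w == c].
Proof.
rewrite /meets => h0 h1 h2.
case/or4P => /eqP E; subst; lia.
Qed.

Lemma L5 (b c x2 y2 u v : nat) :
  ((x2 == b) && (y2 == c)) || ((x2 == c) && (y2 == b)) ->
  meets u v x2 y2 -> [|| u == b, u == c, v == b | v == c].
Proof. rewrite /meets => /orP [] /andP [/eqP -> /eqP ->] ?; lia. Qed.

Theorem proposition3p2 (n : nat) : 5 <= n ->
  forall R : {set Hvert n},
    (forall x, x \in R -> inV2 x) ->
    #|R| = n - 2 ->
    (forall x y, x \in R -> y \in R -> x != y -> Hdist x y = 2) ->
    ~ doubly_resolving R.
Proof.
move=> hn R hR hc hd.
have hR2 : forall p p', inr p \in R -> inr p' \in R ->
    [|| f1 p == f1 p', f1 p == f2 p', f2 p == f1 p' | f2 p == f2 p'].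
  move=> p p' h h'.
  case: (eqVneq (inr p) (inr p' : Hvert n)) => [[<-]|hne]; first by rewrite eqxx.
  have := hd _ _ h h' hne; rewrite HdistE // /=.
  case: ifP => // _; by case: ifP.
have : 0 < #|R| by rewrite hc; lia.
case/card_gt0P => q1 hq1; case: q1 hq1 => [r|p1] hq1; first by have := hR _ hq1.
have [hA|hA] := boolP [forall p : pairT n, (inr p \in R) ==> ((f1 p1 == f1 p) || (f1 p1 == f2 p))].
  apply: (star hn hR hc (c := (sval p1).1)) => p hp.
  exact: (implyP (forallP hA p) hp).
have [hB|hB] := boolP [forall p : pairT n, (inr p \in R) ==> ((f2 p1 == f1 p) || (f2 p1 == f2 p))].
  apply: (star hn hR hc (c := (sval p1).2)) => p hp.
  exact: (implyP (forallP hB p) hp).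
move/forallPn: hA => [p2]; rewrite negb_imply => /andP [hp2 ha2].
move/forallPn: hB => [p3]; rewrite negb_imply => /andP [hp3 hb3].
have [cc hcc] : exists cc : 'I_n, nat_of_ord cc = if f1 p2 == f2 p1 then f2 p2 else f1 p2.
  by case: ifP => _; [exists (sval p2).2 | exists (sval p2).1].
apply: (tri hn (a := (sval p1).1) (b := (sval p1).2) (c := cc) hR) => p hp.
have F1 := f12 p1; have F2 := f12 p2; have F3 := f12 p3; have F := f12 p.
have [E2 hca hcb] : [/\ ((f1 p2 == f2 p1) && (f2 p2 == cc)) || ((f1 p2 == cc) && (f2 p2 == f2 p1)),
    nat_of_ord cc != f1 p1 & nat_of_ord cc != f2 p1].
  have := hR2 p2 p1 hp2 hq1; move: ha2 hcc; case: ifP => [?|/negbT ?] ? hcc; split.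
 - lia.
 - lia.
 - lia.
 - lia.
 - lia.
 - lia.
have E3 := @L3 (f1 p1) (f2 p1) cc (f1 p2) (f2 p2) (f1 p3) (f2 p3) E2 hca hcb hb3
  (hR2 p3 p1 hp3 hq1) (hR2 p2 p3 hp2 hp3).
have M2 := @L5 (f2 p1) cc (f1 p2) (f2 p2) (f1 p) (f2 p) E2 (hR2 p p2 hp hp2).
have M3 := @L4 (f1 p1) (f2 p1) cc (f1 p3) (f2 p3) (f1 p) (f2 p) E3 hca (hR2 p p3 hp hp3).
change ([|| f1 p == f1 p1, f1 p == f2 p1 | f1 p == cc] && [|| f2 p == f1 p1, f2 p == f2 p1 | f2 p == cc]).
exact: (@Lfin (f1 p1) (f2 p1) cc (f1 p) (f2 p) F1 hca hcb (hR2 p p1 hp hq1) M2 M3).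
Qed.
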